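(* Let $k\ge2$, $1\le m<k$, and alternatives $\ell=1,\dots,k$ with i.i.d. replications (independent across alternatives) whose means are pairwise distinct and ordered $\mu_{\langle 1\rangle}>\dots>\mu_{\langle k\rangle}$, satisfying Assumptions 1–4 of the context, and let $G_{ij}$ be as in the context. Let $r^*=(r^*_{\langle1\rangle},\dots,r^*_{\langle k\rangle})$ be an optimal solution of maximize $\min_{i\in\{1,\dots,m\},j\in\{m+1,\dots,k\}}G_{ij}(r_{\langle i\rangle},r_{\langle j\rangle})$ subject to $\sum_{\ell=1}^kr_{\langle\ell\rangle}=1$, $r_{\langle\ell\rangle}\ge0$. Then for all $h\in\{1,\dots,m\}$ and $\ell\in\{m+1,\dots,k\}$, $\min_{j\in\{m+1,\dots,k\}}G_{hj}(r^*_{\langle h\rangle},r^*_{\langle j\rangle})=\min_{i\in\{1,\dots,m\}}G_{i\ell}(r^*_{\langle i\rangle},r^*_{\langle \ell\rangle})$.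
   Context: $G_{ij}(r_{\langle i\rangle},r_{\langle j\rangle})=\inf_{x\in\mathbb R}\big(r_{\langle i\rangle}\Lambda^*_{\langle i\rangle}(x)+r_{\langle j\rangle}\Lambda^*_{\langle j\rangle}(x)\big)$ (the large deviations rate of the event $\bar X_{\langle j\rangle}(r_{\langle j\rangle}T)\ge\bar X_{\langle i\rangle}(r_{\langle i\rangle}T)$), where $\Lambda^*_\ell(x)=\sup_\lambda\{\lambda x-\Lambda_\ell(\lambda)\}$. $\bar X_\ell(n)$ is the sample mean of $n$ replications of alternative $\ell$, $\Lambda^{(n)}_\ell(\lambda)=\log\mathbb E[e^{\lambda\bar X_\ell(n)}]$. Assumption 1: $\Lambda_\ell(\lambda)=\lim_{n\to\infty}\frac1n\Lambda^{(n)}_\ell(n\lambda)$ exists as an extended real number for all $\lambda$. With $\mathcal D_{\Lambda_\ell}=\{\lambda:\Lambda_\ell(\lambda)<\infty\}$, interior $\mathcal D^o_{\Lambda_\ell}$, and $\mathcal F_\ell=\{\Lambda'_\ell(\lambda):\lambda\in\mathcal D^o_{\Lambda_\ell}\}$, interior $\mathcal F^o_\ell$: Assumption 2: $0\in\mathcal D^o_{\Lambda_\ell}$. Assumption 3: $\Lambda_\ell$ strictly convex, continuous on $\mathcal D^o_{\Lambda_\ell}$ and steep. Assumption 4: $[\mu_{\langle k\rangle},\mu_{\langle1\rangle}]\subset\bigcap_\ell\mathcal F^o_\ell$. *)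

(* Defs.v *)
From HB Require Import structures.
From mathcomp Require Import all_boot all_order all_algebra.
From mathcomp Require Import all_classical all_reals all_analysis.
Set Implicit Arguments. Unset Strict Implicit. Unset Printing Implicit Defensive.
Import Order.TTheory GRing.Theory Num.Theory.
Import numFieldNormedType.Exports.
Local Open Scope classical_set_scope.
Local Open Scope ring_scope.

Section Defs.
Context {R : realType}.

Definition mutual_indep {d} {T : measurableType d} (P : probability T R)
  {I : eqType} (X : I -> {RV P >-> R}) : Prop :=
  forall (s : seq I) (B : I -> set R), uniq s -> (forall i, measurable (B i)) ->
    P (\big[setI/setT]_(i <- s) (X i @^-1` B i))
    = (\prod_(i <- s) P (X i @^-1` B i))%E.

Definition LambdaN {d} {T : measurableType d} (P : probability T R)
  (Y : nat -> T -> R) (n : nat) (lam : R) : \bar R :=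
  lne (\int[P]_w (expR (lam * ((n%:R)^-1 * \sum_(t < n) Y t w)))%:E)%E.

Definition dom_eff (L : R -> \bar R) : set R := [set lam | (L lam < +oo)%E].

Definition dLam (L : R -> \bar R) : R -> R := derive1 (fun x => fine (L x)).

Definition Fset (L : R -> \bar R) : set R := dLam L @` interior (dom_eff L).

Definition strictly_convex_eff (L : R -> \bar R) : Prop :=
  forall x y t : R, dom_eff L x -> dom_eff L y -> x != y -> 0 < t < 1 ->
    (L (t * x + (1 - t) * y)%R < t%:E * L x + (1 - t)%R%:E * L y)%E.

(* steepness (essential smoothness, Dembo--Zeitouni Def. 2.3.5, 1-d):
   Lambda is differentiable on the interior of D_Lambda and |Lambda'(lam_n)|
   -> +oo for every sequence lam_n in the interior converging to a boundary
   point of the interior. *)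
Definition steep (L : R -> \bar R) : Prop :=
  (forall x, interior (dom_eff L) x -> derivable (fun y => fine (L y)) x 1)
  /\ forall (u : nat -> R) (b : R),
      (forall n, interior (dom_eff L) (u n)) -> u @ \oo --> b ->
      ~ interior (dom_eff L) b ->
      (fun n => (`|dLam L (u n)|)%:E) @ \oo --> +oo%E.

Definition LamStar (L : R -> \bar R) (x : R) : \bar R :=
  ereal_sup (range (fun lam => ((lam * x)%:E - L lam)%E)).

Definition Grate (Li Lj : R -> \bar R) (a b : R) : \bar R :=
  ereal_inf (range (fun x => (a%:E * LamStar Li x + b%:E * LamStar Lj x)%E)).

(* objective: min over i in {1..m} (indices < m), j in {m+1..k} (indices >= m) *)
Definition objective (k m : nat) (L : 'I_k -> R -> \bar R) (r : 'I_k -> R)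
  : \bar R :=
  ereal_inf [set z | exists i j : 'I_k,
     [/\ (i < m)%N, (m <= j)%N & z = Grate (L i) (L j) (r i) (r j)]].

Definition simplex (k : nat) (r : 'I_k -> R) : Prop :=
  \sum_(l < k) r l = 1 /\ forall l, 0 <= r l.

End Defs.

Arguments mutual_indep {R d T} P {I} X.
Arguments LambdaN {R d T} P Y n lam.
Arguments objective {R} k m L r.
Arguments simplex {R} k r.

(* Main.v *)
Require Import Defs.
From HB Require Import structures.
From mathcomp Require Import all_boot all_order all_algebra.
From mathcomp Require Import all_classical all_reals all_analysis.
From mathcomp Require Import ring lra measurable_realfun.
Import Order.TTheory GRing.Theory Num.Theory.
Import numFieldNormedType.Exports.
Local Open Scope classical_set_scope.
Local Open Scope ring_scope.

Lemma fin_pos {R : realType} (n : nat) (Q : 'I_n -> R -> Prop) :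
  (forall i e e', 0 < e' -> e' <= e -> Q i e -> Q i e') ->
  (forall i, exists e, 0 < e /\ Q i e) -> exists e, 0 < e /\ forall i, Q i e.
Proof.
move=> mono /choice [f hf].
have pos : 0 < \big[Order.min/1]_(i < n) f i.
  by apply: lt_bigmin => // i _; exact: (hf i).1.
exists (\big[Order.min/1]_(i < n) f i); split => // i.
by apply: mono (f i) _ pos _ (hf i).2; exact: bigmin_le.
Qed.
Section G.
Context {R : realType}.
Local Open Scope ereal_scope.

Lemma Gle (L1 L2 : R -> \bar R) a b x :
  Grate L1 L2 a b <= a%:E * LamStar L1 x + b%:E * LamStar L2 x.
Proof. by apply: ereal_inf_lbound; exists x. Qed.

Lemma Sle (L : R -> \bar R) x lam : (lam * x)%:E - L lam <= LamStar L x.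
Proof. by apply: ereal_sup_ubound; exists lam. Qed.

Lemma Gsc (L1 L2 : R -> \bar R) (h1 : forall x, 0 <= LamStar L1 x)
  (h2 : forall x, 0 <= LamStar L2 x) (t a b a' b' : R) :
  (0 <= t)%R -> (0 <= a)%R -> (0 <= b)%R -> (t * a <= a')%R -> (t * b <= b')%R ->
  t%:E * Grate L1 L2 a b <= Grate L1 L2 a' b'.
Proof.
move=> t0 a0 b0 ha hb; apply: le_ereal_inf_tmp => _ [x _ <-].
apply: (le_trans (lee_wpmul2l _ (Gle L1 L2 a b x))); first by rewrite lee_fin.
rewrite ge0_muleDr; first last.
- by apply: mule_ge0; rewrite ?lee_fin.
- by apply: mule_ge0; rewrite ?lee_fin.
rewrite !muleA -!EFinM; apply: leeD; apply: lee_wpmul2r => //; by rewrite lee_fin.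
Qed.

Lemma Gpos (L1 L2 : R -> \bar R) (h1 : forall x, 0 <= LamStar L1 x)
  (h2 : forall x, 0 <= LamStar L2 x) (eps u : R) :
  (0 <= u)%R -> (forall x, eps%:E <= LamStar L1 x \/ eps%:E <= LamStar L2 x) ->
  (u * eps)%:E <= Grate L1 L2 u u.
Proof.
move=> u0 he; apply: le_ereal_inf_tmp => _ [x _ <-].
case: (he x) => hx.
  rewrite -[X in X <= _]adde0 EFinM; apply: leeD; first exact: lee_wpmul2l.
  by apply: mule_ge0; rewrite ?lee_fin.
rewrite -[X in X <= _]add0e EFinM; apply: leeD; last exact: lee_wpmul2l.
by apply: mule_ge0; rewrite ?lee_fin.
Qed.

End G.
Section C.
Context {R : realType}.

Lemma core (f : R -> R) (mu : R) (Q : R -> Prop) :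
  derivable f 0 1 -> f 0 = 0 ->
  (\forall y \near 0, Q y /\ y * mu <= f y) ->
  (forall s, s < mu -> exists y, [/\ y < 0, Q y & f y < y * s]) /\
  (forall s, mu < s -> exists y, [/\ 0 < y, Q y & f y < y * s]).
Proof.
move=> df f0 hQ.
move/cvgrPdist_lt: df => hD.
set D := lim _ in hD.
have key : forall e, 0 < e -> exists r, 0 < r /\ forall y, `|y| < r -> y != 0 ->
   [/\ `|D - y^-1 * f y| < e, Q y & y * mu <= f y].
  move=> e e0.
  have H : \forall y \near (0:R), y != 0 -> `|D - (fun h => h^-1 *: ((f \o shift 0) (h *: 1) - f 0)) y| < e.
    exact: (hD e e0).
  have H2 : \forall y \near (0:R), (y != 0 -> `|D - y^-1 * f y| < e) /\ (Q y /\ y * mu <= f y).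
    apply: filterS2 H hQ => y /= h1 h2; split=> // y0.
    have := h1 y0; congr (_ < _); congr (`|_ - _|).
    by rewrite /= f0 subr0 addr0 -[y%:A]/(y * 1) mulr1.
  move/nbhs_ballP: H2 => [r /= r0 Hr].
  exists r; split => // y yr y0.
  have [h1 [h2 h3]] := Hr y (ltac:(by rewrite /ball /= sub0r normrN)).
  by split => //; apply: h1.
split.
  move=> s smu.
  have [r [r0 Hr]] := key ((mu - s) / 2) (ltac:(lra)).
  have [a1 _ b1] := Hr (r / 2) (ltac:(rewrite ger0_norm; lra)) (ltac:(rewrite gt_eqF //; lra)).
  have [a2 c2 b2] := Hr (- (r / 2)) (ltac:(rewrite normrN ger0_norm; lra)) (ltac:(rewrite lt_eqF //; lra)).
  exists (- (r / 2)); split => //; first lra.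
  set y := r / 2 in a1 b1 a2 b2 *.
  have y0 : 0 < y by rewrite /y; lra.
  have g1 : mu <= y^-1 * f y.
    by rewrite ler_pdivlMl //.
  move: a1 a2; rewrite !ltr_norml => /andP [a1 a1'] /andP [a2 a2'].
  set g2 := (- y)^-1 * f (- y) in a2 a2'.
  have hg2 : s < g2 by lra.
  have : f (- y) = (- y) * g2 by rewrite /g2 mulrA mulfV ?mul1r // oppr_eq0 gt_eqF.
  move=> ->; nra.
move=> s smu.
have [r [r0 Hr]] := key ((s - mu) / 2) (ltac:(lra)).
have [a1 c1 b1] := Hr (r / 2) (ltac:(rewrite ger0_norm; lra)) (ltac:(rewrite gt_eqF //; lra)).
have [a2 _ b2] := Hr (- (r / 2)) (ltac:(rewrite normrN ger0_norm; lra)) (ltac:(rewrite lt_eqF //; lra)).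
exists (r / 2); split => //; first lra.
set y := r / 2 in a1 b1 a2 b2 c1 *.
have y0 : 0 < y by rewrite /y; lra.
have g2 : (- y)^-1 * f (- y) <= mu.
  by rewrite ler_ndivrMl ?oppr_lt0 // mulrC.
move: a1 a2; rewrite !ltr_norml => /andP [a1 a1'] /andP [a2 a2'].
set g1 := y^-1 * f y in a1 a1'.
have hg1 : g1 < s by lra.
have : f y = y * g1 by rewrite /g1 mulrA mulfV ?mul1r // gt_eqF.
move=> ->; nra.
Qed.

End C.
Section Prob.
Context {R : realType} {d : measure_display} {T : measurableType d}
  (P : probability T R).
Local Open Scope ereal_scope.

Lemma int_of_fin (Y : {RV P >-> R}) (c : R) :
  \int[P]_w (Y w)%:E = c%:E -> P.-integrable setT (EFin \o Y).
Proof.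
move=> hY; apply/integrableP; split.
  by apply/measurable_EFinP; exact: measurable_funPT.
have mY : measurable_fun setT (EFin \o Y).
  by apply/measurable_EFinP; exact: measurable_funPT.
rewrite -/((abse \o (EFin \o Y))) fune_abse ge0_integralD //; first last.
- exact: measurable_funeneg.
- exact: measurable_funepos.
have hY' : \int[P]_(x in setT) (EFin \o Y) x = c%:E := hY.
have : (\int[P]_(x in setT) (EFin \o Y)^\+ x - \int[P]_(x in setT) (EFin \o Y)^\- x) \is a fin_num.
  by rewrite -integralE hY'.
rewrite fin_numB => /andP [h1 h2].
by apply: lte_add_pinfty; rewrite ltey_eq ?h1 ?h2.
Qed.

Variable X : nat -> {RV P >-> R}.
Variable mu : R.
Hypothesis hid : forall t, distribution P (X t) = distribution P (X 0%N).
Hypothesis hmean : 'E_P[X 0%N] = mu%:E.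

Lemma intX t : P.-integrable setT (EFin \o X t) /\ \int[P]_w (X t w)%:E = mu%:E.
Proof.
have h0 : \int[P]_w (X 0%N w)%:E = mu%:E by rewrite -expectation_def.
have i0 := int_of_fin (X 0%N) mu h0.
have mabs : measurable_fun [set: R] (fun y : R => `|y%:E|).
  by apply: measurableT_comp => //; exact/measurable_EFinP.
have it : P.-integrable setT (EFin \o X t).
  apply/integrableP; split.
    by apply/measurable_EFinP; exact: measurable_funPT.
  have := ge0_integral_distribution (X t) mabs (fun y => abse_ge0 _).
  have := ge0_integral_distribution (X 0%N) mabs (fun y => abse_ge0 _).
  rewrite (hid t) => -> /= <-.
  by move/integrableP: i0 => [_].
split => //.
have := integral_distribution (@EFin_measurable R setT) it.
have := integral_distribution (@EFin_measurable R setT) i0.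
rewrite (hid t) => e0 et; rewrite -et e0; exact: h0.
Qed.

Lemma int_sum n : \int[P]_w (\sum_(t < n) X t w)%:E = (n%:R * mu)%:E.
Proof.
under eq_integral do rewrite -sumEFin.
rewrite integral_sum //; last by move=> t; exact: (intX t).1.
under eq_bigr do rewrite (intX _).2.
by rewrite sumEFin sumr_const card_ord mulr_natl.
Qed.

Lemma le_int_gen (f g : T -> R) : measurable_fun setT f -> (forall w, (0 <= f w)%R) ->
  P.-integrable setT (EFin \o g) -> (forall w, (g w <= f w)%R) ->
  \int[P]_w (g w)%:E <= \int[P]_w (f w)%:E.
Proof.
move=> mf f0 ig gf.
have [fin|] := boolP (\int[P]_w (f w)%:E < +oo).
  apply: le_integral => //.
    apply/integrableP; split; first exact/measurable_EFinP.
    by under eq_integral do rewrite gee0_abs ?lee_fin //.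
  by move=> w _; rewrite lee_fin.
by rewrite -leNgt leye_eq => /eqP ->; rewrite leey.
Qed.

Lemma jensen n lam :
  (expR (lam * (n%:R * mu))%R)%:E <= \int[P]_w (expR (lam * \sum_(t < n) X t w)%R)%:E.
Proof.
set c := (lam * (n%:R * mu))%R.
set g := fun w => (expR c * (1 - c) + (expR c * lam) * \sum_(t < n) X t w)%R.
have ig : P.-integrable setT (EFin \o g).
  rewrite /g /comp; under eq_fun do rewrite EFinD (EFinM (expR c * lam)).
  apply: integrableD => //; first exact: finite_measure_integrable_cst.
  apply: integrableZl => //.
  under eq_fun do rewrite -sumEFin.
  by apply: integrable_sum => // t _; exact: (intX t).1.
have hg : \int[P]_w (g w)%:E = (expR c)%:E.
  rewrite /g; under eq_integral do rewrite EFinD (EFinM (expR c * lam)).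
  rewrite integralD //; first last.
  - by apply: integrableZl => //; under eq_fun do rewrite -sumEFin;
       apply: integrable_sum => // t _; exact: (intX t).1.
  - exact: finite_measure_integrable_cst.
  have -> : \int[P]_x (expR c * (1 - c))%:E = (expR c * (1 - c))%:E.
    by have := @expectation_cst _ _ _ P (expR c * (1 - c))%R; rewrite unlock.
  rewrite integralZl //; last first.
    by under eq_fun do rewrite -sumEFin; apply: integrable_sum => // t _; exact: (intX t).1.
  rewrite int_sum -EFinM -EFinD; congr (_%:E); rewrite /c; ring.
rewrite -hg; apply: le_int_gen => //.
- apply: measurableT_comp; [exact: measurable_expR|].
  apply: measurable_funM => //; apply: measurable_sum => t.
  exact: measurable_funPT.
- move=> w; rewrite /g.
  have -> : (lam * \sum_(t < n) X t w = c + (lam * \sum_(t < n) X t w - c))%R by ring.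
  rewrite expRD.
  have := expR_ge1Dx (lam * \sum_(t < n) X t w - c)%R.
  have := expR_gt0 c.
  set S := (\sum_(t < n) X t w)%R.
  move=> h1 h2.
  have -> : (expR c * (1 - c) + expR c * lam * S = expR c * (1 + (lam * S - c)))%R by ring.
  by rewrite ler_pM2l.
Qed.

Lemma int1 : \int[P]_w (1%R)%:E = 1.
Proof. by have := @expectation_cst _ _ _ P 1%R; rewrite unlock. Qed.

Lemma LamFacts (L : R -> \bar R)
  (hA1 : forall lam,
      (fun n : nat => ((n.+1%:R)^-1)%:E
                      * LambdaN P (fun t => X t) n.+1 (n.+1%:R * lam))%E
        @ \oo --> L lam) :
  L 0%R = 0 /\ forall lam, (lam * mu)%:E <= L lam.
Proof.
split.
  have h := hA1 0%R.
  have e : (fun n : nat => ((n.+1%:R)^-1)%:E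
                      * LambdaN P (fun t => X t) n.+1 (n.+1%:R * 0%R)) = fun _ => 0.
    apply: funext => n; rewrite /LambdaN mulr0.
    under eq_integral do rewrite mul0r expR0.
    by rewrite int1 lne1 mule0.
  rewrite e in h.
  exact: (cvg_unique _ h (cvg_cst _)).
move=> lam.
apply: (cvge_to_ge (hA1 lam)); apply: nearW => n.
have hn : (0 < n.+1%:R :> R)%R by rewrite ltr0n.
rewrite /LambdaN.
under eq_integral do rewrite mulrA (mulrC _ lam) -(mulrA lam) mulfV ?mulr1 ?gt_eqF //.
have J := jensen n.+1 lam.
have : ((lam * (n.+1%:R * mu))%:E <= lne (\int[P]_w (expR (lam * \sum_(t < n.+1) X t w)%R)%:E)).
  have -> : ((lam * (n.+1%:R * mu))%:E) = lne (expR (lam * (n.+1%:R * mu))%R)%:E.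
    by rewrite lne_EFin ?expR_gt0 // expRK.
  rewrite lee_lne // in_itv /= ?leey ?andbT ?lee_fin ?expR_ge0 //.
  by apply: integral_ge0 => w _; rewrite lee_fin expR_ge0.
move=> h.
have hn' : (0 <= ((n.+1%:R)^-1 : R))%R by rewrite invr_ge0 ltW.
apply: le_trans (lee_wpmul2l _ h); last by rewrite lee_fin.
rewrite -EFinM lee_fin mulrCA mulKf ?gt_eqF //.
Qed.

End Prob.

Theorem corollary1 (R : realType) (d : measure_display) (T : measurableType d)
  (P : probability T R) (k m : nat)
  (hk : (2 <= k)%N) (hm1 : (1 <= m)%N) (hmk : (m < k)%N)
  (* X l t : t-th replication of alternative l; alternatives are indexed by
     their rank (index 0 = <1>, ..., index k-1 = <k>) *)
  (X : 'I_k -> nat -> {RV P >-> R})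
  (hind : mutual_indep P (fun p : 'I_k * nat => X p.1 p.2))
  (hid : forall l t, distribution P (X l t) = distribution P (X l 0%N))
  (mu : 'I_k -> R)
  (hmean : forall l, ('E_P[X l 0%N] = (mu l)%:E)%E)
  (hord : forall i j : 'I_k, (i < j)%N -> mu j < mu i)
  (Lam : 'I_k -> R -> \bar R)
  (* Assumption 1 *)
  (A1 : forall l lam,
      (fun n : nat => ((n.+1%:R)^-1)%:E
                      * LambdaN P (fun t => X l t) n.+1 (n.+1%:R * lam))%E
        @ \oo --> Lam l lam)
  (* Assumption 2 *)
  (A2 : forall l, interior (dom_eff (Lam l)) 0)
  (* Assumption 3 *)
  (A3 : forall l, [/\ strictly_convex_eff (Lam l),
                     (forall x, interior (dom_eff (Lam l)) x ->
                        {for x, continuous (fun y => fine (Lam l y))})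
                   & steep (Lam l)])
  (* Assumption 4: [mu_<k>, mu_<1>] is contained in every F^o_l *)
  (A4 : forall x : R, (exists j, mu j <= x) -> (exists i, x <= mu i) ->
          forall l, interior (Fset (Lam l)) x)
  (r : 'I_k -> R)
  (hr : simplex k r)
  (hopt : forall r' : 'I_k -> R, simplex k r' ->
            (objective k m Lam r' <= objective k m Lam r)%E) :
  forall h l : 'I_k, (h < m)%N -> (m <= l)%N ->
    ereal_inf [set z | exists j : 'I_k,
                 (m <= j)%N /\ z = Grate (Lam h) (Lam j) (r h) (r j)]
    = ereal_inf [set z | exists i : 'I_k,
                 (i < m)%N /\ z = Grate (Lam i) (Lam l) (r i) (r l)].
Proof.
have LF l := LamFacts P (X l) (mu l) (hid l) (hmean l) (Lam l) (A1 l).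
have L0 l : Lam l 0 = 0%E by case: (LF l).
have LJ l lam : ((lam * mu l)%:E <= Lam l lam)%E by case: (LF l) => _; apply.
have S0 l x : (0 <= LamStar (Lam l) x)%E.
  by apply: le_trans (Sle _ x 0); rewrite mul0r L0 sube0.
have Smu l : (LamStar (Lam l) (mu l) <= 0)%E.
  apply: ge_ereal_sup => _ [lam _ <-].
  have := LJ l lam; case: (Lam l lam) => [y| |] //=.
    by rewrite !lee_fin => h; lra.
  by rewrite leNye.
have Lfin l y : dom_eff (Lam l) y -> Lam l y = (fine (Lam l y))%:E.
  move=> dy; rewrite fineK //; apply/fin_numPlt; rewrite dy andbT.
  exact: (lt_le_trans (ltNyr _) (LJ l y)).
pose i0 : 'I_k := Ordinal (leq_ltn_trans (leq_pred m) hmk).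
pose j0 : 'I_k := Ordinal hmk.
have hi0 : mu j0 < mu i0 by apply: hord => /=; rewrite prednK.
pose s := (mu i0 + mu j0) / 2.
have hsi (l : 'I_k) : (l < m)%N -> s < mu l.
  move=> lm; have : mu i0 <= mu l.
    have : (l <= i0)%N by rewrite /= -ltnS prednK.
    rewrite leq_eqVlt => /orP [/eqP e|lt]; first by rewrite (_ : l = i0) //; exact: val_inj.
    exact/ltW/hord.
  rewrite /s; lra.
have hsj (l : 'I_k) : (m <= l)%N -> mu l < s.
  move=> lm; have : mu l <= mu j0.
    move: lm; rewrite leq_eqVlt => /orP [/eqP e|lt]; first by rewrite (_ : l = j0) //; exact: val_inj.
    exact/ltW/hord.
  rewrite /s; lra.
have F3 : exists eps, 0 < eps /\ forall l : 'I_k, forall x,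
    ((l < m)%N -> x <= s -> (eps%:E <= LamStar (Lam l) x)%E) /\
    ((m <= l)%N -> s <= x -> (eps%:E <= LamStar (Lam l) x)%E).
  apply: fin_pos.
    move=> l e e' e'0 e'e h x; have [h1 h2] := h x; split.
      by move=> a b; apply: le_trans (h1 a b); rewrite lee_fin.
    by move=> a b; apply: le_trans (h2 a b); rewrite lee_fin.
  move=> l.
  have [_ _ [dA _]] := A3 l.
  have [C1 C2] := core (fun y => fine (Lam l y)) (mu l) (dom_eff (Lam l))
    (dA 0 (A2 l)) (ltac:(by rewrite /= L0)) 
    (ltac:(apply: filterS (A2 l) => y dy; split => //;
           by rewrite -lee_fin -(Lfin l y dy))).
  have [lm|ml] := ltnP l m.
    have [y [y0 dy fy]] := C1 s (hsi l lm).
    exists (y * s - fine (Lam l y)); split; first lra.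
    move=> x; split => // _ xs.
    apply: le_trans (Sle _ x y); rewrite (Lfin l y dy) -EFinB lee_fin.
    have : y * s <= y * x by nra.
    lra.
  have [y [y0 dy fy]] := C2 s (hsj l ml).
  exists (y * s - fine (Lam l y)); split; first lra.
  move=> x; split => // _ xs.
  apply: le_trans (Sle _ x y); rewrite (Lfin l y dy) -EFinB lee_fin.
  have : y * s <= y * x by nra.
  lra.
have [eps [eps0 Heps]] := F3.
pose z := objective k m Lam r.
have k0 : (0 < k%:R :> R) by rewrite ltr0n; apply: leq_trans hk.
have zpos : (0 < z)%E.
  pose ru : 'I_k -> R := fun _ => k%:R^-1.
  have sru : simplex k ru.
    split; last by move=> l; rewrite /ru invr_ge0 ltW.
    by rewrite /ru sumr_const card_ord -[_ *+ k]mulr_natl mulfV // gt_eqF.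
  apply: lt_le_trans (hopt ru sru).
  apply: (@lt_le_trans _ _ (k%:R^-1 * eps)%:E); first by rewrite lte_fin mulr_gt0 // invr_gt0.
  apply: le_ereal_inf_tmp => _ [i [j [hi hj ->]]].
  apply: Gpos => //.
  move=> x; have [xs|sx] := leP x s.
    by left; apply: (Heps i x).1.
  by right; apply: (Heps j x).2 => //; exact: ltW.
have zle (i j : 'I_k) : (i < m)%N -> (m <= j)%N -> (z <= Grate (Lam i) (Lam j) (r i) (r j))%E.
  by move=> hi hj; apply: ereal_inf_lbound; exists i, j.
have Gz1 (i j : 'I_k) b : (0 <= b) -> (Grate (Lam i) (Lam j) 0 b <= 0)%E.
  move=> b0; apply: le_trans (Gle _ _ _ _ (mu j)) _.
  rewrite mul0e add0e; apply: mule_ge0_le0; by rewrite ?lee_fin.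
have Gz2 (i j : 'I_k) a : (0 <= a) -> (Grate (Lam i) (Lam j) a 0 <= 0)%E.
  move=> a0; apply: le_trans (Gle _ _ _ _ (mu i)) _.
  rewrite mul0e adde0; apply: mule_ge0_le0; by rewrite ?lee_fin.
have [rsum rge0] := hr.
have rle1 l : r l <= 1.
  rewrite -rsum (bigD1 l) //= lerDl; apply: sumr_ge0 => q _; exact: rge0.
have i0m : (i0 < m)%N by rewrite /= prednK.
have key (p : 'I_k) (M : \bar R) :
    (forall i j : 'I_k, (i < m)%N -> (m <= j)%N -> (i = p \/ j = p) ->
       (M <= Grate (Lam i) (Lam j) (r i) (r j))%E) -> (z < M)%E -> False.
  move=> HM zM.
  have zfin : z = (fine z)%:E.
    rewrite fineK //; apply/fin_numPlt; apply/andP; split.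
      exact: (lt_trans (ltNyr 0) zpos).
    exact: lt_le_trans zM (leey M).
  set zr := fine z in zfin.
  have zr0 : 0 < zr by rewrite -lte_fin -zfin.
  have rp0 : 0 < r p.
    rewrite lt_neqAle rge0 andbT; apply/negP => /eqP rp.
    have M0 : (M <= 0)%E.
      have [pm|mp] := ltnP p m.
        apply: le_trans (HM p j0 pm (leqnn m) (or_introl erefl)) _.
        rewrite -rp; exact: Gz1 (rge0 _).
      apply: le_trans (HM i0 p i0m mp (or_intror erefl)) _.
      rewrite -rp; exact: Gz2 (rge0 _).
    by have := lt_trans zpos zM; rewrite ltNge M0.
  have [t [t0 t1 tM]] : exists t, [/\ 0 < t, t < 1 & (z < t%:E * M)%E].
    move: zM HM; case: M => [Mr| |] zM HM.
    - rewrite zfin lte_fin in zM.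
      have Mr0 : 0 < Mr by lra.
      set q := zr / Mr.
      have q1 : q < 1 by rewrite /q ltr_pdivrMr // mul1r.
      have q0 : 0 < q by rewrite /q divr_gt0.
      have qM : q * Mr = zr by rewrite /q divfK // gt_eqF.
      exists ((q + 1) / 2); split; [lra|lra|].
      rewrite zfin -EFinM lte_fin.
      have -> : (q + 1) / 2 * Mr = (q * Mr + Mr) / 2 by ring.
      rewrite qM; lra.
    - exists (1 / 2); split; [lra|lra|].
      by rewrite gt0_muley ?lte_fin // zfin ltry.
    - by rewrite ltNge leNye in zM.
  pose e := (1 - t) * r p / (k%:R - 1).
  have k1 : 0 < k%:R - 1 :> R.
    have : (2%:R <= k%:R :> R) by rewrite ler_nat.
    lra.
  have e0 : 0 < e by rewrite /e divr_gt0 // mulr_gt0 // subr_gt0.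
  pose r' : 'I_k -> R := fun l => r l + e - (if l == p then k%:R * e else 0).
  have r'p : r' p = t * r p.
    rewrite /r' eqxx /e; field; by rewrite (gt_eqF k1).
  have r'q q : q != p -> r' q = r q + e.
    by move=> /negbTE qp; rewrite /r' qp subr0.
  have sr' : simplex k r'.
    split.
      rewrite /r' sumrB big_split /= rsum sumr_const card_ord (bigD1 p) //= eqxx.
      rewrite big1 ?addr0; last by move=> q /negbTE ->.
      by rewrite -[e *+ k]mulr_natl addrK.
    move=> q; case: (eqVneq q p) => [->|qp]; first by rewrite r'p mulr_ge0 // ltW.
    by rewrite r'q // addr_ge0 // ltW.
  have := hopt r' sr'; apply/negP; rewrite -ltNge.
  apply: (@lt_le_trans _ _ (Order.min (t%:E * M) ((1 + e)%:E * z))%E).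
    rewrite lt_min tM /= [X in (X < _)%E]zfin [X in (_ * X)%E]zfin -EFinM lte_fin; nra.
  apply: le_ereal_inf_tmp => _ [i [j [hi hj ->]]].
  have rr q : 0 <= r q := rge0 q.
  case: (boolP ((i == p) || (j == p))) => [/orP hij|].
    rewrite ge_min; apply/orP; left.
    apply: le_trans (Gsc (Lam i) (Lam j) (S0 i) (S0 j) t (r i) (r j) (r' i) (r' j)
                      (ltW t0) (rr i) (rr j) _ _).
    + apply: lee_wpmul2l; first by rewrite lee_fin ltW.
      apply: HM => //; case: hij => /eqP ->; by [left|right].
    + case: (eqVneq i p) => [->|ip]; first by rewrite r'p.
      rewrite r'q //; have := rr i; nra.
    + case: (eqVneq j p) => [->|jp]; first by rewrite r'p.
      rewrite r'q //; have := rr j; nra.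
  rewrite negb_or => /andP [ip jp].
  rewrite ge_min; apply/orP; right.
  apply: le_trans (Gsc (Lam i) (Lam j) (S0 i) (S0 j) (1 + e) (r i) (r j) (r' i) (r' j)
                    _ (rr i) (rr j) _ _).
  + apply: lee_wpmul2l; [rewrite lee_fin; lra | exact: zle].
  + lra.
  + rewrite r'q //; have := rle1 i; have := rr i; nra.
  + rewrite r'q //; have := rle1 j; have := rr j; nra.
move=> h l hh hl.
have E1 : ereal_inf [set z0 | exists j : 'I_k,
                 (m <= j)%N /\ z0 = Grate (Lam h) (Lam j) (r h) (r j)] = z.
  apply/eqP; rewrite eq_le; apply/andP; split; last first.
    by apply: le_ereal_inf_tmp => _ [j [hj ->]]; exact: zle.
  rewrite leNgt; apply/negP => lt.
  apply: (key h _ _ lt) => i j hi hj [->|jh].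
    by apply: ereal_inf_lbound; exists j.
  by move: hh; rewrite -jh ltnNge hj.
have E2 : ereal_inf [set z0 | exists i : 'I_k,
                 (i < m)%N /\ z0 = Grate (Lam i) (Lam l) (r i) (r l)] = z.
  apply/eqP; rewrite eq_le; apply/andP; split; last first.
    by apply: le_ereal_inf_tmp => _ [i [hi ->]]; exact: zle.
  rewrite leNgt; apply/negP => lt.
  apply: (key l _ _ lt) => i j hi hj [il|->].
    by move: hl; rewrite -il leqNgt hi.
  by apply: ereal_inf_lbound; exists i.
by rewrite E1 E2.
Qed.
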